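(* Let $I\in\mathbb{I}_{2,n}$. Then the ss-compressed category $\mathcal{C}^{ss}_I$ is isomorphic to the path category (with no relations) of a quiver of one of the following five forms: a single vertex; $\bullet\to\bullet$; $\bullet\to\bullet\leftarrow\bullet$; $\bullet\leftarrow\bullet\to\bullet$; $\bullet\to\bullet\leftarrow\bullet\to\bullet$. In particular $\mathcal{C}^{ss}_I$ is of finite representation type (Dynkin type $A_k$ with $k\le 4$).
   Context: Fix a field $K$. $G_{2,n}$ is the equioriented commutative $2\times n$ grid: the quiver with vertex set $\{(i,j):1\le i\le 2,\ 1\le j\le n\}$ and arrows $(i,j)\to(i,j+1)$ and $(1,j)\to(2,j)$, bound by all commutativity relations. An interval of $G_{2,n}$ is a nonempty full subquiver $I$ which is connected (as an undirected graph) and convex (whenever $x,y\in I_0$ and there are paths $x\to z$, $z\to y$ in $G_{2,n}$, then $z\in I_0$); $\mathbb{I}_{2,n}$ is the set of intervals. $I^{ss}_0$ is the set of vertices of $I$ that are sources or sinks of the quiver $I$. $KG_{2,n}$ is the $K$-linear category whose objects are vertices and morphisms are $K$-linear combinations of paths modulo commutativity relations; $\mathcal{C}^{ss}_I$ is its full subcategory on $I^{ss}_0$. *)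

(* Defs.v *)
From HB Require Import structures.
From mathcomp Require Import all_boot all_order all_algebra.
Set Implicit Arguments. Unset Strict Implicit. Unset Printing Implicit Defensive.
Import GRing.Theory.
Local Open Scope ring_scope.

(* Small K-linear categories with finitely many objects and           *)
(* finite-dimensional Hom spaces; Hom(x,y) is given in coordinates    *)
(* as the row space 'rV[K]_(dim x y) (w.r.t. a chosen basis).         *)
(* comp g f is the composite "g after f" (f : x -> y, g : y -> z).     *)
Record linCat (K : fieldType) := LinCat {
  obj : finType;
  dim : obj -> obj -> nat;
  comp : forall x y z : obj, 'rV[K]_(dim y z) -> 'rV[K]_(dim x y) -> 'rV[K]_(dim x z);
  idm : forall x : obj, 'rV[K]_(dim x x)
}.

Definition cat_iso (K : fieldType) (C D : linCat K) : Prop :=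
  exists phi : obj C -> obj D, bijective phi /\
  exists F : forall x y : obj C, 'rV[K]_(dim x y) -> 'rV[K]_(dim (phi x) (phi y)),
    [/\ (forall x y, bijective (F x y)),
        (forall x y (a : K) u v, F x y (a *: u + v) = a *: F x y u + F x y v),
        (forall x y z (g : 'rV[K]_(dim y z)) (f : 'rV[K]_(dim x y)),
            F x z (comp g f) = comp (F y z g) (F x y f)) &
        (forall x, F x x (idm x) = idm (phi x))].

Definition fullSub (K : fieldType) (C : linCat K) (S : {set obj C}) : linCat K :=
  @LinCat K {x : obj C | x \in S}
    (fun x y => dim (val x) (val y))
    (fun x y z g f => comp g f)
    (fun x => idm (val x)).

(* Vertex (i,j) of the paper (1<=i<=2, 1<=j<=n) is (i-1, j-1).         *)
Definition gvert (n : nat) := ('I_2 * 'I_n)%type.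

Definition garr (n : nat) : rel (gvert n) := fun x y =>
  ((x.1 == y.1) && (val y.2 == (val x.2).+1)) ||
  ((val x.1 == 0%N) && (val y.1 == 1%N) && (x.2 == y.2)).

Definition gpath (n : nat) (x y : gvert n) : bool := connect (@garr n) x y.

Definition is_interval (n : nat) (I : {set gvert n}) : Prop :=
  [/\ I != set0,
      (forall x y, x \in I -> y \in I ->
         connect [rel a b | [&& a \in I, b \in I & garr a b || garr b a]] x y) &
      (forall x y z, x \in I -> y \in I -> gpath x z -> gpath z y -> z \in I)].

Definition is_source (n : nat) (I : {set gvert n}) (v : gvert n) : bool :=
  [forall u, (u \in I) ==> ~~ garr u v].
Definition is_sink (n : nat) (I : {set gvert n}) (v : gvert n) : bool :=
  [forall u, (u \in I) ==> ~~ garr v u].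
Definition Iss (n : nat) (I : {set gvert n}) : {set gvert n} :=
  [set v in I | is_source I v || is_sink I v].

(* The K-linear category KG_{2,n}: paths modulo all commutativity
   relations, so Hom(x,y) has basis the single class of paths x -> y
   if one exists (dimension 1), and is 0 otherwise; composition is
   concatenation of (classes of) paths. *)
Definition KG (K : fieldType) (n : nat) : linCat K :=
  @LinCat K (gvert n)
    (fun x y => nat_of_bool (gpath x y))
    (fun x y z g f => \row_(k < gpath x z)
        \sum_(i < gpath y z) \sum_(j < gpath x y) g 0 i * f 0 j)
    (fun x => const_mx 1).

Definition Css (K : fieldType) (n : nat) (I : {set gvert n}) : linCat K :=
  @fullSub K (KG K n) (Iss I).

(* A quiver: qv vertices 0..qv-1 and a list of arrows (source,target). *)
(* Paths are sequences of arrow indices, first arrow first; paths of   *)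
(* length <= qv are enumerated, which gives all paths when the quiver  *)
(* is acyclic (as are all quivers used below).                         *)
Record quiver := Quiver { qv : nat; qa : seq (nat * nat) }.

Definition qarr (Q : quiver) := 'I_(size (qa Q)).
Definition qsrc (Q : quiver) (a : qarr Q) : nat := (nth (0%N, 0%N) (qa Q) a).1.
Definition qtgt (Q : quiver) (a : qarr Q) : nat := (nth (0%N, 0%N) (qa Q) a).2.

Fixpoint isPath (Q : quiver) (x y : nat) (p : seq (qarr Q)) : bool :=
  match p with
  | [::] => x == y
  | a :: p' => (qsrc a == x) && isPath (qtgt a) y p'
  end.

Fixpoint allseqs (T : finType) (m : nat) : seq (seq T) :=
  match m with
  | 0 => [:: [::]]
  | m'.+1 => [::] :: [seq a :: s | a <- enum T, s <- allseqs T m']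
  end.

Definition qpaths (Q : quiver) (x y : nat) : seq (seq (qarr Q)) :=
  [seq p <- undup (@allseqs (qarr Q) (qv Q)) | @isPath Q x y p].

Definition pathCat (K : fieldType) (Q : quiver) : linCat K :=
  @LinCat K 'I_(qv Q)
    (fun x y => size (qpaths Q x y))
    (fun x y z g f => \row_(k < size (qpaths Q x z))
        \sum_(i < size (qpaths Q y z)) \sum_(j < size (qpaths Q x y))
          ((nth [::] (qpaths Q x y) j ++ nth [::] (qpaths Q y z) i
             == nth [::] (qpaths Q x z) k)%:R * (g 0 i * f 0 j)))
    (fun x => \row_(k < size (qpaths Q x x))
        ((nth [::] (qpaths Q x x) k == [::])%:R)).

Definition quiverA1 := Quiver 1 [::].
Definition quiverA2 := Quiver 2 [:: (0,1)]%N.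
Definition quiverA3in := Quiver 3 [:: (0,1); (2,1)]%N.
Definition quiverA3out := Quiver 3 [:: (1,0); (1,2)]%N.
Definition quiverA4 := Quiver 4 [:: (0,1); (2,1); (2,3)]%N.

(* Main.v *)
Require Import Defs.
From HB Require Import structures.
From mathcomp Require Import all_boot all_order all_algebra.
From mathcomp Require Import zify.
From Stdlib Require Import Classical.
Import Defs.
Set Implicit Arguments. Unset Strict Implicit. Unset Printing Implicit Defensive.
Import GRing.Theory.

Definition le2 n (x y : gvert n) : bool := ((x.1 : nat) <= y.1)%N && ((x.2 : nat) <= y.2)%N.
Definition wt n (x : gvert n) : nat := (x.1 : nat) + x.2.

Lemma gv_eq n (x y : gvert n) : (x.1 : nat) = y.1 -> (x.2 : nat) = y.2 -> x = y.
Proof. by case: x y => [a b] [c d] /= /val_inj -> /val_inj ->. Qed.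

Lemma garrE n (x y : gvert n) : garr x y =
  (((x.1 : nat) == y.1) && ((y.2 : nat) == (x.2 : nat).+1)) ||
  (((x.1 : nat) == 0%N) && ((y.1 : nat) == 1%N) && ((x.2 : nat) == y.2)).
Proof. by []. Qed.

Lemma conn_step n (pt pb qt qb a b : gvert n) :
  (pt.1:nat) = 0 -> (pb.1:nat) = 1 -> (qt.1:nat) = 0 -> (qb.1:nat) = 1 -> ~ le2 pt qb ->
  (le2 b qt \/ le2 b qb) -> (le2 pt b \/ le2 pb b) -> garr a b || garr b a ->
  ((a.1:nat) == 1) && ((a.2:nat) <= qb.2) -> ((b.1:nat) == 1) && ((b.2:nat) <= qb.2).
Proof.
case: pt => [pt1 pt2]; case: pb => [pb1 pb2]; case: qt => [qt1 qt2]; case: qb => [qb1 qb2];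
case: a => [a1 a2]; case: b => [b1 b2]; rewrite /le2 !garrE /=.
have := ltn_ord b1; have := ltn_ord a1. lia.
Qed.

Lemma garr_le n (x y : gvert n) : garr x y -> le2 x y /\ x <> y.
Proof.
rewrite garrE /le2 => H; split; first lia.
by move=> E; subst; lia.
Qed.

Lemma le2_refl n (x : gvert n) : le2 x x.
Proof. by rewrite /le2 !leqnn. Qed.

Lemma le2_trans n (x y z : gvert n) : le2 x y -> le2 y z -> le2 x z.
Proof. rewrite /le2; lia. Qed.

Lemma le2_anti n (x y : gvert n) : le2 x y -> le2 y x -> x = y.
Proof. rewrite /le2 => H1 H2; apply: gv_eq; lia. Qed.

Lemma le2_row n (x y : gvert n) : (x.1 : nat) = 1%N -> (y.1 : nat) = 0%N -> le2 x y = false.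
Proof. rewrite /le2 => H1 H2; rewrite H1 H2. by []. Qed.

Lemma row_neq n (x y : gvert n) : (x.1 : nat) <> y.1 -> x <> y.
Proof. by move=> H E; apply: H; rewrite E. Qed.

Lemma row2 n (x : gvert n) : (x.1 : nat) = 0%N \/ (x.1 : nat) = 1%N.
Proof. have := ltn_ord x.1; lia. Qed.

Lemma hpath n (i : 'I_2) (j j' : 'I_n) : (j <= j')%N -> gpath (i, j) (i, j').
Proof.
case: j' => m Hm /=; elim: m Hm => [|m IH] Hm Hle.
- have -> : j = Ordinal Hm by apply: val_inj => /=; lia.
  exact: connect0.
- have [E|Lt] : (j : nat) = m.+1 \/ (j <= m)%N by lia.
  + have -> : j = Ordinal Hm by apply: val_inj => /=; lia.
    exact: connect0.
  + have Hm' : (m < n)%N by lia.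
    apply: connect_trans (IH Hm' Lt) _; apply: connect1.
    by rewrite garrE /= !eqxx.
Qed.

Lemma gpathE n (x y : gvert n) : gpath x y = le2 x y.
Proof.
apply/idP/idP.
- move/connectP => [p Hp ->] {y}; elim: p x Hp => [|a p IH] x /=.
    by rewrite le2_refl.
  move=> /andP [Hxa Hp]; have [H1 _] := garr_le Hxa.
  exact: le2_trans H1 (IH a Hp).
- case: x y => [i j] [i' j']; rewrite /le2 /= => /andP [Hi Hj].
  have [E|[E0 E1]] : (i : nat) = i' \/ ((i : nat) = 0%N /\ (i' : nat) = 1%N).
    by have := ltn_ord i'; lia.
  + rewrite (val_inj E); exact: hpath.
  + apply: connect_trans (hpath i Hj) _; apply: connect1.
    by rewrite garrE /= E0 E1 !eqxx orbT.
Qed.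

Lemma connect_inv (T : finType) (e : rel T) (P : pred T) x y :
  (forall a b, e a b -> P a -> P b) -> connect e x y -> P x -> P y.
Proof.
move=> H /connectP [p Hp ->] {y}; elim: p x Hp => [|a p IH] x //= /andP [Hxa Hp] Px.
exact: IH Hp (H _ _ Hxa Px).
Qed.

Lemma pred_ex n (u v : gvert n) : le2 u v -> u <> v -> exists2 w, le2 u w & garr w v.
Proof.
case: u v => [ui uj] [vi vj]; rewrite /le2 /= => Hle Hne.
have [Lt|Ge] := ltnP uj vj.
- have Hj : ((vj : nat) - 1 < n)%N by have := ltn_ord vj; lia.
  exists (vi, Ordinal Hj); rewrite ?garrE /=; lia.
- have Hr : (ui : nat) <> vi.
    by move=> E; apply: Hne; apply: gv_eq => //=; lia.
  exists (ui, uj); first exact: le2_refl.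
  move: Hle Hr; rewrite garrE /=; have := ltn_ord ui; have := ltn_ord vi; lia.
Qed.

Lemma succ_ex n (u v : gvert n) : le2 v u -> u <> v -> exists2 w, le2 w u & garr v w.
Proof.
case: u v => [ui uj] [vi vj]; rewrite /le2 /= => Hle Hne.
have [Lt|Ge] := ltnP vj uj.
- have Hj : ((vj : nat).+1 < n)%N by have := ltn_ord uj; lia.
  exists (vi, Ordinal Hj); rewrite ?garrE /=; lia.
- have Hr : (ui : nat) <> vi.
    by move=> E; apply: Hne; apply: gv_eq => //=; lia.
  exists (ui, uj); first exact: le2_refl.
  move: Hle Hr; rewrite garrE /=; have := ltn_ord ui; have := ltn_ord vi; lia.
Qed.

Definition ismin n (I : {set gvert n}) v := v \in I /\ forall u, u \in I -> le2 u v -> u = v.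
Definition ismax n (I : {set gvert n}) v := v \in I /\ forall u, u \in I -> le2 v u -> u = v.
Definition convex n (I : {set gvert n}) :=
  forall x y z, x \in I -> y \in I -> gpath x z -> gpath z y -> z \in I.

Lemma IssP n (I : {set gvert n}) v : convex I -> (v \in Iss I <-> ismin I v \/ ismax I v).
Proof.
move=> Hconv; rewrite inE; split.
- move=> /andP [Hv /orP [Hs|Hs]]; [left|right]; split => // u Hu Hle.
  + case: (boolP (u == v)) => [/eqP //|Hne]; exfalso.
    have [w Hw1 Hw2] := pred_ex Hle (fun E => elimN eqP Hne E).
    have Hw : w \in I by apply: (Hconv u v w) => //; rewrite gpathE //; exact: (garr_le Hw2).1.
    by move/forallP: Hs => /(_ w); rewrite Hw Hw2.
  + case: (boolP (u == v)) => [/eqP //|Hne]; exfalso.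
    have [w Hw1 Hw2] := succ_ex Hle (fun E => elimN eqP Hne E).
    have Hw : w \in I by apply: (Hconv v u w) => //; rewrite gpathE //; exact: (garr_le Hw2).1.
    by move/forallP: Hs => /(_ w); rewrite Hw Hw2.
- case=> [[Hv H]|[Hv H]]; rewrite Hv /=; apply/orP; [left|right];
    apply/forallP => u; apply/implyP => Hu; apply/negP => Hg;
    have [Hl Hne] := garr_le Hg.
  + exact: Hne (H u Hu Hl).
  + exact: Hne (esym (H u Hu Hl)).
Qed.

Lemma le2_wt n (u x : gvert n) : le2 u x -> u <> x -> (wt u < wt x)%N.
Proof.
move=> Hle Hne.
have : ~ ((u.1 : nat) = x.1 /\ (u.2 : nat) = x.2) by case=> ? ?; apply: Hne; apply: gv_eq.
move: Hle; rewrite /le2 /wt; lia.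
Qed.

Lemma ex_min n (I : {set gvert n}) x : x \in I -> exists2 p, ismin I p & le2 p x.
Proof.
have : forall k x, wt x = k -> x \in I -> exists2 p, ismin I p & le2 p x; last by move/(_ _ x erefl).
elim/ltn_ind => k IH {}x Hk Hx.
case: (boolP [exists u, (u \in I) && le2 u x && (u != x)]).
- move/existsP => [u /andP [/andP [Hu Hle] /eqP Hne]].
  have Hlt : (wt u < k)%N by rewrite -Hk; exact: le2_wt Hle Hne.
  have [p Hp Hpu] := IH (wt u) Hlt u erefl Hu.
  by exists p => //; exact: le2_trans Hpu Hle.
- move/existsPn => H; exists x; last exact: le2_refl.
  split => // u Hu Hle; apply/eqP; move: (H u); rewrite Hu Hle /=; by rewrite negbK.
Qed.

Lemma wt_bound n (u : gvert n) : (wt u <= n)%N.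
Proof. case: u => [a b]; rewrite /wt /=; have := ltn_ord a; have := ltn_ord b; lia. Qed.

Lemma ex_max n (I : {set gvert n}) x : x \in I -> exists2 q, ismax I q & le2 x q.
Proof.
have : forall k x, n.+1 - wt x = k -> x \in I -> exists2 q, ismax I q & le2 x q; last by move/(_ _ x erefl).
elim/ltn_ind => k IH {}x Hk Hx.
case: (boolP [exists u, (u \in I) && le2 x u && (u != x)]).
- move/existsP => [u /andP [/andP [Hu Hle] /eqP Hne]].
  have Hlt : (n.+1 - wt u < k)%N.
    have := le2_wt Hle (fun E => Hne (esym E)); rewrite -Hk.
    have := wt_bound u; lia.
  have [q Hq Huq] := IH _ Hlt u erefl Hu.
  by exists q => //; exact: le2_trans Hle Huq.
- move/existsPn => H; exists x; last exact: le2_refl.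
  split => // u Hu Hle; apply/eqP; move: (H u); rewrite Hu Hle /=; by rewrite negbK.
Qed.

Lemma single n (I : {set gvert n}) v : is_interval I -> ismin I v -> ismax I v ->
  forall x, x \in I -> x = v.
Proof.
case=> _ Hconn _ [Hv Hmin] [_ Hmax] x Hx.
have Hst : forall a b, [rel a b | [&& a \in I, b \in I & garr a b || garr b a]] a b ->
    (fun y => y == v) a -> (fun y => y == v) b.
  move=> a b /= /and3P [Ha Hb /orP [H|H]] /eqP Ea; subst a.
  + by have [Hl _] := garr_le H; rewrite (Hmax b Hb Hl).
  + by have [Hl _] := garr_le H; rewrite (Hmin b Hb Hl).
by have /eqP := connect_inv Hst (Hconn v x Hv Hx) (eqxx v).
Qed.

Lemma split2 n (P : gvert n -> Prop) a b : P a -> P b -> a <> b ->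
  (forall x y, P x -> P y -> (x.1 : nat) = y.1 -> x = y) ->
  exists t bb, [/\ P t, P bb, (t.1 : nat) = 0%N, (bb.1 : nat) = 1%N &
                forall x, P x -> x = t \/ x = bb].
Proof.
move=> Pa Pb Nab H.
have Hr : (a.1 : nat) <> b.1 by move=> E; exact: Nab (H _ _ Pa Pb E).
have Hall : forall x, P x -> x = a \/ x = b.
  move=> x Px; case: (row2 x) => Ex; case: (row2 a) => Ea; case: (row2 b) => Eb;
  try lia; try (left; apply: H => //; lia); try (right; apply: H => //; lia).
case: (row2 a) => Ea.
- exists a, b; split => //; case: (row2 b); lia.
- exists b, a; split => //; [case: (row2 b); lia | move=> x /Hall; tauto].
Qed.

Lemma single_rows n (I : {set gvert n}) v x y : is_interval I -> ismin I v -> ismax I v ->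
  x \in I -> y \in I -> (x.1 : nat) <> y.1 -> False.
Proof.
move=> HI Hmin Hmax Hx Hy Hr; apply: Hr.
by rewrite (single HI Hmin Hmax Hx) (single HI Hmin Hmax Hy).
Qed.

Lemma same_row_cmp n (x y : gvert n) : (x.1 : nat) = y.1 -> le2 x y \/ le2 y x.
Proof. case: x y => [a b] [c d]; rewrite /le2 /= => E; lia. Qed.

Lemma eq_mem_iff (b c : bool) : (b <-> c) -> b = c.
Proof. by move=> [H1 H2]; apply/idP/idP; [exact: H1 | exact: H2]. Qed.
Fixpoint allseqsL (T : Type) (e : seq T) (m : nat) : seq (seq T) :=
  match m with
  | 0 => [:: [::]]
  | m'.+1 => [::] :: [seq a :: s | a <- e, s <- allseqsL e m']
  end.
Lemma allseqsE (T : finType) m : allseqs T m = allseqsL (enum T) m.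
Proof. by elim: m => //= m ->. Qed.
Definition qpathsL (Q : quiver) (e : seq (qarr Q)) (x y : nat) :=
  [seq p <- undup (allseqsL e (qv Q)) | @isPath Q x y p].
Lemma qpathsE Q x y : qpaths Q x y = qpathsL (enum (qarr Q)) x y.
Proof. by rewrite /qpaths allseqsE. Qed.
Definition qcheck (Q : quiver) (e : seq (qarr Q)) (adj : nat -> nat -> bool) : bool :=
  all (fun x => all (fun y =>
    (size (qpathsL e x y) == adj x y) && (nth [::] (qpathsL e x x) 0 == [::]) &&
    all (fun z => adj x y ==> adj y z ==> adj x z ==>
       (nth [::] (qpathsL e x y) 0 ++ nth [::] (qpathsL e y z) 0 == nth [::] (qpathsL e x z) 0))
      (iota 0 (qv Q))) (iota 0 (qv Q))) (iota 0 (qv Q)).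

Lemma qcheckP Q adj : qcheck (enum (qarr Q)) adj -> forall x y : 'I_(qv Q),
  [/\ size (qpaths Q x y) = adj x y, nth [::] (qpaths Q x x) 0 = [::] &
   forall z : 'I_(qv Q), adj x y -> adj y z -> adj x z ->
     nth [::] (qpaths Q x y) 0 ++ nth [::] (qpaths Q y z) 0 = nth [::] (qpaths Q x z) 0].
Proof.
move=> /allP H x y.
have Mi : forall w : 'I_(qv Q), (w : nat) \in iota 0 (qv Q) by move=> w; rewrite mem_iota /=.
have /allP Hx := H x (Mi x).
have /andP [/andP [/eqP H1 /eqP H2] /allP H3] := Hx y (Mi y).
split; [by rewrite qpathsE | by rewrite qpathsE | ].
move=> z a b c; rewrite !qpathsE; have := H3 z (Mi z).
by rewrite a b c /= => /eqP.
Qed.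

Local Open Scope ring_scope.

Definition rsum (K : fieldType) m (u : 'rV[K]_m) : K := \sum_(i < m) u 0 i.

Definition thin (K : fieldType) (C : linCat K) : Prop :=
  [/\ (forall x y : obj C, (dim x y <= 1)%N),
      (forall (x y z : obj C) (g : 'rV[K]_(dim y z)) (f : 'rV[K]_(dim x y)),
          comp g f = const_mx (rsum g * rsum f)) &
      (forall x : obj C, idm x = const_mx 1)].

Lemma rsum_const (K : fieldType) m (c : K) : rsum (const_mx c : 'rV_m) = c *+ m.
Proof.
rewrite /rsum (eq_bigr (fun=> c)) ?sumr_const ?card_ord // => i _; by rewrite mxE.
Qed.

Lemma rsum_mulrn (K : fieldType) m m' (u : 'rV[K]_m) : (m <= 1)%N -> m' = m ->
  rsum u *+ m' = rsum u.
Proof.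
move=> + ->; case: m u => [|[|m]] u // _.
by rewrite mulr0n /rsum big_ord0.
Qed.

Lemma ord_le1 m (i : 'I_m) : (m <= 1)%N -> m = 1%N /\ (i : nat) = 0%N.
Proof. case: i => i Hi /= H; lia. Qed.

Lemma rsum_small (K : fieldType) m (u : 'rV[K]_m) : (m <= 1)%N -> const_mx (rsum u) = u.
Proof.
case: m u => [|[|m]] u // _; apply/matrixP => i j; rewrite mxE.
- by case: j.
- by rewrite /rsum big_ord1 (ord1 i) (ord1 j).
Qed.

Lemma thin_iso (K : fieldType) (C D : linCat K) (phi : obj C -> obj D) :
  bijective phi -> thin C -> thin D ->
  (forall x y, dim (phi x) (phi y) = dim x y) -> cat_iso C D.
Proof.
move=> bphi [C1 C2 C3] [D1 D2 D3] Hd.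
exists phi; split => //.
exists (fun x y (u : 'rV[K]_(dim x y)) => const_mx (rsum u) : 'rV[K]_(dim (phi x) (phi y))).
split.
- move=> x y.
  exists (fun u : 'rV[K]_(dim (phi x) (phi y)) => const_mx (rsum u) : 'rV[K]_(dim x y)).
  + move=> u /=; rewrite rsum_const (rsum_mulrn _ (C1 x y) (Hd x y)).
    exact: rsum_small.
  + move=> u /=; rewrite rsum_const (rsum_mulrn _ (D1 (phi x) (phi y)) (esym (Hd x y))).
    exact: rsum_small.
- move=> x y a u v; apply/matrixP => i j; rewrite !mxE /rsum.
  under eq_bigr => k _ do rewrite !mxE.
  by rewrite big_split /= -mulr_sumr.
- move=> x y z g f; rewrite C2 D2 !rsum_const; apply/matrixP => i j; rewrite !mxE.
  have [Hxz _] := ord_le1 j (D1 (phi x) (phi z)).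
  rewrite (rsum_mulrn _ (C1 y z) (Hd y z)) (rsum_mulrn _ (C1 x y) (Hd x y)).
  by rewrite -(Hd x z) Hxz mulr1n.
- move=> x; rewrite C3 D3 rsum_const; apply/matrixP => i j; rewrite !mxE.
  have [H1 _] := ord_le1 j (D1 (phi x) (phi x)).
  by rewrite -(Hd x x) H1 mulr1n.
Qed.

Lemma thin_Css (K : fieldType) n (I : {set gvert n}) : thin (Css K I).
Proof.
split => /=.
- by move=> x y; case: gpath.
- move=> x y z g f; apply/matrixP => i k; rewrite !mxE /rsum mulr_suml.
  by apply: eq_bigr => a _; rewrite mulr_sumr.
- by [].
Qed.

Lemma thin_path (K : fieldType) Q adj : qcheck (enum (qarr Q)) adj -> thin (pathCat K Q).
Proof.
move=> Hc; split => /=.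
- by move=> x y; have [-> _ _] := qcheckP Hc x y; case: (adj x y).
- move=> x y z g f; apply/matrixP => i k; rewrite !mxE /rsum mulr_suml.
  apply: eq_bigr => a _; rewrite mulr_sumr; apply: eq_bigr => b _.
  have [Sxy _ _] := qcheckP Hc x y.
  have [Syz _ _] := qcheckP Hc y z.
  have [Sxz _ Hcomp] := qcheckP Hc x z.
  have Ha : (a < adj y z)%N by rewrite -Syz.
  have Hb : (b < adj x y)%N by rewrite -Sxy.
  have Hk : (k < adj x z)%N by rewrite -Sxz.
  have [Hxy' _ Hcomp'] := qcheckP Hc x y.
  have Exy : adj x y by move: Hb; case: (adj x y).
  have Eyz : adj y z by move: Ha; case: (adj y z).
  have Exz : adj x z by move: Hk; case: (adj x z).
  have -> : (a : nat) = 0%N by move: Ha; case: (adj y z) => /= ?; lia.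
  have -> : (b : nat) = 0%N by move: Hb; case: (adj x y) => /= ?; lia.
  have -> : (k : nat) = 0%N by move: Hk; case: (adj x z) => /= ?; lia.
  by rewrite Hcomp' // eqxx mul1r.
- move=> x; apply/matrixP => i k; rewrite !mxE.
  have [Sxx Hid _] := qcheckP Hc x x.
  have Hk : (k < adj x x)%N by rewrite -Sxx.
  have -> : (k : nat) = 0%N by move: Hk; case: (adj x x) => /= ?; lia.
  by rewrite Hid eqxx.
Qed.

Lemma iso_of_list (K : fieldType) n (I : {set gvert n}) Q adj (vs : seq (gvert n)) (v0 : gvert n) :
  qcheck (enum (qarr Q)) adj -> uniq vs -> (forall v, (v \in Iss I) = (v \in vs)) ->
  size vs = qv Q ->
  (forall i j : 'I_(qv Q), gpath (nth v0 vs i) (nth v0 vs j) = adj i j) ->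
  cat_iso (Css K I) (pathCat K Q).
Proof.
move=> Hc Hu Hmem Hs Hd.
have Hidx : forall x : {x | x \in Iss I}, (index (val x) vs < qv Q)%N.
  by move=> [x Hx]; rewrite -Hs index_mem -Hmem.
pose phi := fun x => Ordinal (Hidx x).
have Hnth : forall i : 'I_(qv Q), nth v0 vs i \in Iss I.
  by move=> i; rewrite Hmem mem_nth // Hs.
pose psi := fun i : 'I_(qv Q) => exist (fun x => x \in Iss I) (nth v0 vs i) (Hnth i).
refine (@thin_iso K (Css K I) (pathCat K Q) phi _ _ _ _).
- exists psi.
  + move=> [x Hx]; apply: val_inj => /=; rewrite nth_index // -Hmem; exact Hx.
  + move=> i; apply: val_inj => /=; rewrite index_uniq ?Hs //.
- exact: thin_Css.
- exact: thin_path Hc.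
- move=> [x Hx] [y Hy].
  have [S _ _] := qcheckP Hc (phi (exist _ x Hx)) (phi (exist _ y Hy)).
  have := Hd (phi (exist _ x Hx)) (phi (exist _ y Hy)).
  rewrite /= !nth_index -?Hmem // => E.
  by rewrite S -E.
Qed.

Local Close Scope ring_scope.

Definition adjA1 (i j : nat) : bool := true.
Definition adjA2 (i j : nat) : bool := (i == j) || ((i == 0) && (j == 1)).
Definition adjA3in (i j : nat) : bool := (i == j) || ((j == 1) && ((i == 0) || (i == 2))).
Definition adjA3out (i j : nat) : bool := (i == j) || ((i == 1) && ((j == 0) || (j == 2))).
Definition adjA4 (i j : nat) : bool :=
  (i == j) || ((i == 0) && (j == 1)) || ((i == 2) && (j == 1)) || ((i == 2) && (j == 3)).

Lemma chkA1 : qcheck (enum (qarr quiverA1)) adjA1.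
Proof.
have -> : enum (qarr quiverA1) = [::] by apply: (inj_map val_inj); rewrite val_enum_ord.
by vm_compute.
Qed.
Lemma chkA2 : qcheck (enum (qarr quiverA2)) adjA2.
Proof.
have -> : enum (qarr quiverA2) = [:: @Ordinal 1 0 isT].
  by apply: (inj_map val_inj); rewrite val_enum_ord.
by vm_compute.
Qed.
Lemma chkA3in : qcheck (enum (qarr quiverA3in)) adjA3in.
Proof.
have -> : enum (qarr quiverA3in) = [:: @Ordinal 2 0 isT; @Ordinal 2 1 isT].
  by apply: (inj_map val_inj); rewrite val_enum_ord.
by vm_compute.
Qed.
Lemma chkA3out : qcheck (enum (qarr quiverA3out)) adjA3out.
Proof.
have -> : enum (qarr quiverA3out) = [:: @Ordinal 2 0 isT; @Ordinal 2 1 isT].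
  by apply: (inj_map val_inj); rewrite val_enum_ord.
by vm_compute.
Qed.
Lemma chkA4 : qcheck (enum (qarr quiverA4)) adjA4.
Proof.
have -> : enum (qarr quiverA4) = [:: @Ordinal 3 0 isT; @Ordinal 3 1 isT; @Ordinal 3 2 isT].
  by apply: (inj_map val_inj); rewrite val_enum_ord.
by vm_compute.
Qed.

Lemma neqF (T : eqType) (a b : T) : a <> b -> (a == b) = false.
Proof. by move=> H; apply/negbTE/eqP. Qed.

Theorem mainTheorem19 (K : fieldType) (n : nat) (I : {set gvert n}) :
  is_interval I ->
  cat_iso (Css K I) (pathCat K quiverA1) \/
  cat_iso (Css K I) (pathCat K quiverA2) \/
  cat_iso (Css K I) (pathCat K quiverA3in) \/
  cat_iso (Css K I) (pathCat K quiverA3out) \/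
  cat_iso (Css K I) (pathCat K quiverA4).
Proof.
move=> HI; have [Hne Hconn Hconv] := HI.
have Hiss := fun v => IssP v Hconv.
have [x0 Hx0] : exists x, x \in I by case/set0Pn: Hne => x Hx; exists x.
have [p0 Hp0 _] := ex_min Hx0.
have [q0 Hq0 _] := ex_max Hx0.
have minrow : forall x y, ismin I x -> ismin I y -> (x.1 : nat) = y.1 -> x = y.
  move=> x y [Hx Hmx] [Hy Hmy] E; case: (same_row_cmp E) => H.
  - exact: Hmy x Hx H.
  - exact: esym (Hmx y Hy H).
have maxrow : forall x y, ismax I x -> ismax I y -> (x.1 : nat) = y.1 -> x = y.
  move=> x y [Hx Hmx] [Hy Hmy] E; case: (same_row_cmp E) => H.
  - exact: esym (Hmx y Hy H).
  - exact: Hmy x Hx H.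
have [[p1 Hp1 Np]|Hu1] := classic (exists2 p1, ismin I p1 & p1 <> p0);
have [[q1 Hq1 Nq]|Hu2] := classic (exists2 q1, ismax I q1 & q1 <> q0).
-
  right; right; right; right.
  have [pt [pb [Hpt Hpb pt0 pb1 Hpall]]] := split2 Hp0 Hp1 (fun E => Np (esym E)) minrow.
  have [qt [qb [Hqt Hqb qt0 qb1 Hqall]]] := split2 Hq0 Hq1 (fun E => Nq (esym E)) maxrow.
  have HptI := Hpt.1; have HpbI := Hpb.1; have HqtI := Hqt.1; have HqbI := Hqb.1.
  have Rp : (pt.1 : nat) <> pb.1 by rewrite pt0 pb1.
  have below : forall x, x \in I -> le2 pt x \/ le2 pb x.
    by move=> x Hx; have [p Hp Hpx] := ex_min Hx; case: (Hpall p Hp) => <-; tauto.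
  have above : forall x, x \in I -> le2 x qt \/ le2 x qb.
    by move=> x Hx; have [q Hq Hxq] := ex_max Hx; case: (Hqall q Hq) => <-; tauto.
  have F1 : le2 pb qt = false by apply: le2_row.
  have F2 : le2 qb pt = false by apply: le2_row.
  have F3 : le2 pb pt = false by apply: le2_row.
  have F4 : le2 qb qt = false by apply: le2_row.
  have T1 : le2 pb qb by case: (above pb HpbI); rewrite ?F1.
  have T2 : le2 pt qt by case: (below qt HqtI); rewrite ?F1.
  have T3 : le2 pt qb.
    apply: NNPP => Hn.
    pose P := fun x : gvert n => ((x.1 : nat) == 1%N) && ((x.2 : nat) <= qb.2)%N.
    have Hst : forall a b, [rel a b | [&& a \in I, b \in I & garr a b || garr b a]] a b ->
        P a -> P b.
      move=> a b /= /and3P [Ha Hb Hab] Pa.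
      exact: conn_step pt0 pb1 qt0 qb1 Hn (above b Hb) (below b Hb) Hab Pa.
    have := connect_inv Hst (Hconn pb pt HpbI HptI).
    rewrite /P pb1 pt0 /= => H; suff : false by []; apply: H.
    by move: T1; rewrite /le2 => /andP [].
  have Npbqb : pb <> qb.
    by move=> E; rewrite -E in Hqb; exact: single_rows HI Hpb Hqb HptI HpbI Rp.
  have Nptqt : pt <> qt.
    by move=> E; rewrite -E in Hqt; exact: single_rows HI Hpt Hqt HptI HpbI Rp.
  have F5 : le2 qb pb = false.
    by apply/negbTE/negP => H; apply: Npbqb; exact: le2_anti T1 H.
  have F6 : le2 pt pb = false.
    by apply/negbTE/negP => H; apply: Rp; rewrite (Hpb.2 pt HptI H).
  have F7 : le2 qt pb = false.
    by apply/negbTE/negP => H; move: (Hpb.2 qt HqtI H) => E; move: qt0; rewrite E pb1.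
  have F8 : le2 qt qb = false.
    by apply/negbTE/negP => H; move: (Hqt.2 qb HqbI H) => E; move: qb1; rewrite E qt0.
  have F9 : le2 qt pt = false.
    by apply/negbTE/negP => H; apply: Nptqt; exact: le2_anti T2 H.
  have Nrow : forall x y : gvert n, (x.1 : nat) <> y.1 -> (x == y) = false.
    by move=> x y H; apply: neqF; exact: row_neq.
  apply: (@iso_of_list K n I quiverA4 adjA4 [:: pb; qb; pt; qt] pb chkA4) => //.
  + rewrite /= !inE (neqF Npbqb) (neqF Nptqt) (Nrow pb pt) ?(Nrow pb qt) ?(Nrow qb pt) ?(Nrow qb qt) //;
      by rewrite ?pb1 ?pt0 ?qt0 ?qb1.
  + move=> v; apply: eq_mem_iff; rewrite Hiss !inE; split.
    * by case=> [/Hpall [] -> | /Hqall [] ->]; rewrite eqxx ?orbT.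
    * by case/or4P => /eqP ->; [left | right | left | right].
  + move=> [[|[|[|[|i]]]] Hi'] [[|[|[|[|j]]]] Hj] //=;
      by rewrite gpathE ?le2_refl ?T1 ?T2 ?T3 ?F1 ?F2 ?F3 ?F4 ?F5 ?F6 ?F7 ?F8 ?F9.
-
  right; right; left.
  have Umax : forall q, ismax I q -> q = q0.
    by move=> q Hq; apply: NNPP => Hn; apply: Hu2; exists q.
  have Hi : forall x, x \in I -> le2 x q0.
    by move=> x Hx; have [q Hq Hxq] := ex_max Hx; rewrite -(Umax q Hq).
  have [pt [pb [Hpt Hpb pt0 pb1 Hpall]]] := split2 Hp0 Hp1 (fun E => Np (esym E)) minrow.
  have Hq0I := Hq0.1; have HptI := Hpt.1; have HpbI := Hpb.1.
  have Rtb : (pt.1 : nat) <> pb.1 by rewrite pt0 pb1.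
  have Nqt : q0 <> pt.
    by move=> E; rewrite E in Hq0; exact: single_rows HI Hpt Hq0 HptI HpbI Rtb.
  have Nqb : q0 <> pb.
    by move=> E; rewrite E in Hq0; exact: single_rows HI Hpb Hq0 HptI HpbI Rtb.
  have Ntb : pt <> pb by move=> E; apply: Rtb; rewrite E.
  have T1 := Hi pt HptI; have T2 := Hi pb HpbI.
  have F1 : le2 q0 pt = false.
    by apply/negbTE/negP => H; apply: Nqt; exact: le2_anti H T1.
  have F2 : le2 q0 pb = false.
    by apply/negbTE/negP => H; apply: Nqb; exact: le2_anti H T2.
  have F3 : le2 pt pb = false.
    by apply/negbTE/negP => H; apply: Ntb; exact: (Hpb.2 pt HptI H).
  have F4 : le2 pb pt = false by apply: le2_row.
  apply: (@iso_of_list K n I quiverA3in adjA3in [:: pt; q0; pb] pt chkA3in) => //.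
  + rewrite /= !inE (neqF Ntb) orbF eq_sym (neqF Nqt) /=.
    by rewrite (neqF Nqb).
  + move=> v; apply: eq_mem_iff; rewrite Hiss !inE; split.
    * by case=> [/Hpall [] -> | /Umax ->]; rewrite eqxx ?orbT.
    * by case/or3P => /eqP ->; [left | right | left].
  + move=> [[|[|[|i]]] Hi'] [[|[|[|j]]] Hj] //=;
      by rewrite gpathE ?le2_refl ?T1 ?T2 ?F1 ?F2 ?F3 ?F4.
-
  right; right; right; left.
  have Umin : forall p, ismin I p -> p = p0.
    by move=> p Hp; apply: NNPP => Hn; apply: Hu1; exists p.
  have Lo : forall x, x \in I -> le2 p0 x.
    by move=> x Hx; have [p Hp Hpx] := ex_min Hx; rewrite -(Umin p Hp).
  have [qt [qb [Hqt Hqb qt0 qb1 Hqall]]] := split2 Hq0 Hq1 (fun E => Nq (esym E)) maxrow.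
  have Hp0I := Hp0.1; have HqtI := Hqt.1; have HqbI := Hqb.1.
  have Rtb : (qt.1 : nat) <> qb.1 by rewrite qt0 qb1.
  have Npt : p0 <> qt.
    by move=> E; rewrite E in Hp0; exact: single_rows HI Hp0 Hqt HqtI HqbI Rtb.
  have Npb : p0 <> qb.
    by move=> E; rewrite E in Hp0; exact: single_rows HI Hp0 Hqb HqtI HqbI Rtb.
  have Ntb : qt <> qb by move=> E; apply: Rtb; rewrite E.
  have T1 := Lo qt HqtI; have T2 := Lo qb HqbI.
  have F1 : le2 qt p0 = false.
    by apply/negbTE/negP => H; apply: Npt; exact: le2_anti T1 H.
  have F2 : le2 qb p0 = false.
    by apply/negbTE/negP => H; apply: Npb; exact: le2_anti T2 H.
  have F3 : le2 qt qb = false.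
    by apply/negbTE/negP => H; apply: Ntb; exact: esym (Hqt.2 qb HqbI H).
  have F4 : le2 qb qt = false by apply: le2_row.
  apply: (@iso_of_list K n I quiverA3out adjA3out [:: qt; p0; qb] p0 chkA3out) => //.
  + rewrite /= !inE (neqF Ntb) (neqF Npb) orbF /=.
    by rewrite eq_sym (neqF Npt).
  + move=> v; apply: eq_mem_iff; rewrite Hiss !inE; split.
    * by case=> [/Umin -> | /Hqall [] ->]; rewrite eqxx ?orbT.
    * by case/or3P => /eqP ->; [right | left | right].
  + move=> [[|[|[|i]]] Hi'] [[|[|[|j]]] Hj] //=;
      by rewrite gpathE ?le2_refl ?T1 ?T2 ?F1 ?F2 ?F3 ?F4.
-
  have Umin : forall p, ismin I p -> p = p0.
    by move=> p Hp; apply: NNPP => Hn; apply: Hu1; exists p.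
  have Umax : forall q, ismax I q -> q = q0.
    by move=> q Hq; apply: NNPP => Hn; apply: Hu2; exists q.
  have Lo : forall x, x \in I -> le2 p0 x.
    by move=> x Hx; have [p Hp Hpx] := ex_min Hx; rewrite -(Umin p Hp).
  have Hi : forall x, x \in I -> le2 x q0.
    by move=> x Hx; have [q Hq Hxq] := ex_max Hx; rewrite -(Umax q Hq).
  have Hp0I := Hp0.1; have Hq0I := Hq0.1.
  have [E|Npq] := classic (p0 = q0).
  + left; subst q0.
    apply: (@iso_of_list K n I quiverA1 adjA1 [:: p0] p0 chkA1) => //.
    * move=> v; apply: eq_mem_iff; rewrite Hiss !inE; split.
      - by case=> [/Umin -> | /Umax ->].
      - by move/eqP ->; left.
    * move=> [[|i] Hi'] [[|j] Hj] //=; by rewrite gpathE le2_refl.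
  + right; left.
    have T1 := Lo q0 Hq0I.
    have F1 : le2 q0 p0 = false by apply/negbTE/negP => H; apply: Npq; exact: le2_anti T1 H.
    apply: (@iso_of_list K n I quiverA2 adjA2 [:: p0; q0] p0 chkA2) => //.
    * by rewrite /= inE (neqF Npq).
    * move=> v; apply: eq_mem_iff; rewrite Hiss !inE; split.
      - by case=> [/Umin -> | /Umax ->]; rewrite eqxx ?orbT.
      - by case/orP => /eqP ->; [left | right].
    * move=> [[|[|i]] Hi'] [[|[|j]] Hj] //=; by rewrite gpathE ?le2_refl ?T1 ?F1.
Qed.
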